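(* For all $\alpha\in\dot\Delta$ and all $\beta'\in\dot\Delta'$, the product $r_\alpha r_{\beta'}$ has infinite order.
   Context: Let $\tau=(1+\sqrt5)/2$, $\tau'=(1-\sqrt5)/2$. Let $\Delta\subset\mathbb{R}^4$ be the set of 120 vectors consisting of: the 8 vectors obtained from $(\pm1,0,0,0)$ by permuting coordinates; the 16 vectors $\frac12(\pm1,\pm1,\pm1,\pm1)$; and the 96 vectors obtained from $\frac12(0,\pm1,\pm\tau',\pm\tau)$ (all sign choices) by even permutations of the coordinates. Let $\Delta'$ be the image of $\Delta$ under the Galois conjugation $\tau\leftrightarrow\tau'$ applied to each coordinate. Put $K=\Delta\cap\Delta'$, $\dot\Delta=\Delta\setminus K$, $\dot\Delta'=\Delta'\setminus K$. For a unit vector $a$, $r_a(x)=x-2(x\cdot a)a$ is the orthogonal reflection in $a$. *)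

(* Defs.v *)
From HB Require Import structures.
From mathcomp Require Import all_boot all_order all_algebra all_fingroup.
Set Implicit Arguments. Unset Strict Implicit. Unset Printing Implicit Defensive.
Import Order.TTheory GRing.Theory Num.Theory.
Local Open Scope ring_scope.

Section H4.
Variable R : rcfType.

Definition tau : R := (1 + Num.sqrt 5) / 2.
Definition tau' : R := (1 - Num.sqrt 5) / 2.

Definition vec4 (a b c d : R) : 'rV[R]_4 := \row_(i < 4) [:: a; b; c; d]`_i.

Definition permv (s : 'S_4) (v : 'rV[R]_4) : 'rV[R]_4 := \row_(i < 4) v 0 (s i).

Definition sgn (e : bool) : R := (-1) ^+ e.

Definition DeltaA (v : 'rV[R]_4) : Prop :=
  exists (s : 'S_4) (e : bool), v = permv s (vec4 (sgn e) 0 0 0).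

Definition DeltaB (v : 'rV[R]_4) : Prop :=
  exists e1 e2 e3 e4 : bool,
    v = vec4 (sgn e1 / 2) (sgn e2 / 2) (sgn e3 / 2) (sgn e4 / 2).

Definition DeltaC (a b : R) (v : 'rV[R]_4) : Prop :=
  exists (s : 'S_4) (e1 e2 e3 : bool), ~~ odd_perm s /\
    v = permv s (vec4 0 (sgn e1 / 2) (sgn e2 * a / 2) (sgn e3 * b / 2)).

Definition Delta (v : 'rV[R]_4) : Prop :=
  DeltaA v \/ DeltaB v \/ DeltaC tau' tau v.

(* Galois conjugate tau <-> tau' applied coordinatewise: it fixes the
   rational vectors and swaps tau, tau' in the third family *)
Definition Delta' (v : 'rV[R]_4) : Prop :=
  DeltaA v \/ DeltaB v \/ DeltaC tau tau' v.

Definition K (v : 'rV[R]_4) : Prop := Delta v /\ Delta' v.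
Definition Deltadot (v : 'rV[R]_4) : Prop := Delta v /\ ~ K v.
Definition Deltadot' (v : 'rV[R]_4) : Prop := Delta' v /\ ~ K v.

Definition dot (x y : 'rV[R]_4) : R := (x *m y^T) 0 0.
Definition refl (a x : 'rV[R]_4) : 'rV[R]_4 := x - (2 * dot x a) *: a.

Definition infinite_order (f : 'rV[R]_4 -> 'rV[R]_4) : Prop :=
  forall n : nat, (0 < n)%N -> exists x, iter n f x <> x.

End H4.

(* Main.v *)
Require Import Defs.
From HB Require Import structures.
From mathcomp Require Import all_boot all_order all_algebra all_fingroup.
From mathcomp Require Import ring lra zify.
Import Order.TTheory GRing.Theory Num.Theory.
Local Open Scope ring_scope.
Set Implicit Arguments. Unset Strict Implicit.

Lemma z2 (x : 'Z_2) : x = 0 \/ x = 1.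
Proof. case: x => [[|[|m]]] H. by left; apply: val_inj. by right; apply: val_inj. by []. Qed.

Definition P (z : int) : bool := (z%:~R : 'Z_2) != 0.

Lemma PD a b : P (a + b) = P a (+) P b.
Proof. rewrite /P intrD. by case: (z2 (a%:~R)) => ->; case: (z2 (b%:~R)) => ->. Qed.
Lemma PN a : P (- a) = P a.
Proof. rewrite /P intrN. by case: (z2 (a%:~R)) => ->. Qed.
Lemma PB a b : P (a - b) = P a (+) P b.
Proof. by rewrite PD PN. Qed.
Lemma PM a b : P (a * b) = P a && P b.
Proof. rewrite /P intrM. by case: (z2 (a%:~R)) => ->; case: (z2 (b%:~R)) => ->. Qed.
Lemma P2 : P 2 = false.
Proof. by rewrite /P. Qed.
Lemma P2X e : (0 < e)%N -> P (2 ^+ e) = false.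
Proof. case: e => // e _. by rewrite exprS PM P2. Qed.
Lemma P0 : P 0 = false. Proof. by rewrite /P. Qed.
Lemma P1 : P 1 = true. Proof. by rewrite /P. Qed.
Lemma Pm1 : P (-1) = true. Proof. by rewrite PN P1. Qed.
Lemma P16 a : P (16 * a) = false.
Proof. by rewrite PM /P. Qed.
Definition zt := (int * int)%type.
Definition addZ (x y : zt) : zt := (x.1 + y.1, x.2 + y.2).
Definition subZ (x y : zt) : zt := (x.1 - y.1, x.2 - y.2).
Definition mulZ (x y : zt) : zt := (x.1 * y.1 + x.2 * y.2, x.1 * y.2 + x.2 * y.1 + x.2 * y.2).
Definition sZ (e : bool) (x : zt) : zt := if e then (- x.1, - x.2) else x.

Definition emb {R : rcfType} (x : zt) : R := x.1%:~R + x.2%:~R * tau R.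

Lemma sqrt5E {R : rcfType} : Num.sqrt (5 : R) * Num.sqrt 5 = 5.
Proof. by rewrite -expr2 sqr_sqrtr // ler0n. Qed.

Lemma tau2 {R : rcfType} : tau R * tau R = tau R + 1.
Proof. apply/eqP; rewrite -subr_eq0; apply/eqP. rewrite /tau.
have -> : (1 + Num.sqrt (5:R)) / 2 * ((1 + Num.sqrt 5) / 2) - ((1 + Num.sqrt 5) / 2 + 1)
  = (Num.sqrt 5 * Num.sqrt 5 - 5) / 4 by field.
by rewrite sqrt5E subrr mul0r. Qed.

Lemma tau'E {R : rcfType} : tau' R = 1 - tau R.
Proof. rewrite /tau /tau'; by field. Qed.

Lemma embD {R : rcfType} x y : emb (addZ x y) = emb x + emb y :> R.
Proof. rewrite /emb /= !intrD; ring. Qed.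
Lemma embB {R : rcfType} x y : emb (subZ x y) = emb x - emb y :> R.
Proof. rewrite /emb /= !intrB; ring. Qed.
Lemma embM {R : rcfType} x y : emb (mulZ x y) = emb x * emb y :> R.
Proof. rewrite /emb /= !intrD !intrM.
have h := @tau2 R.
have -> : (x.1%:~R + x.2%:~R * tau R) * (y.1%:~R + y.2%:~R * tau R) =
  x.1%:~R * y.1%:~R + x.2%:~R * y.2%:~R * (tau R * tau R) + (x.1%:~R * y.2%:~R + x.2%:~R * y.1%:~R) * tau R :> R by ring.
rewrite h; ring. Qed.
Lemma embS {R : rcfType} e x : emb (sZ e x) = sgn R e * emb x :> R.
Proof. case: e; rewrite /sgn /emb /= ?expr1 ?expr0 ?intrN; ring. Qed.
Lemma emb1 {R : rcfType} : emb (1, 0) = 1 :> R.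
Proof. rewrite /emb /=; ring. Qed.
Lemma embtau {R : rcfType} : emb (0, 1) = tau R.
Proof. rewrite /emb /=; ring. Qed.
Lemma embtau' {R : rcfType} : emb (1, -1) = tau' R.
Proof. rewrite tau'E /emb /= intrN; ring. Qed.
Lemma emb0 {R : rcfType} : emb (0, 0) = 0 :> R.
Proof. rewrite /emb /=; ring. Qed.
Lemma dotE {R : rcfType} (x y : 'rV[R]_4) : dot x y = \sum_i x 0 i * y 0 i.
Proof. rewrite /dot mxE; apply: eq_bigr => i _; by rewrite mxE. Qed.
Lemma dotDl {R : rcfType} (x y z : 'rV[R]_4) : dot (x + y) z = dot x z + dot y z.
Proof. by rewrite /dot mulmxDl mxE. Qed.
Lemma dotZl {R : rcfType} k (x z : 'rV[R]_4) : dot (k *: x) z = k * dot x z.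
Proof. by rewrite /dot -scalemxAl mxE. Qed.
Lemma dotNl {R : rcfType} (x z : 'rV[R]_4) : dot (- x) z = - dot x z.
Proof. by rewrite -scaleN1r dotZl mulN1r. Qed.
Lemma dotBl {R : rcfType} (x y z : 'rV[R]_4) : dot (x - y) z = dot x z - dot y z.
Proof. by rewrite dotDl dotNl. Qed.
Lemma dotC {R : rcfType} (x y : 'rV[R]_4) : dot x y = dot y x.
Proof. rewrite !dotE; apply: eq_bigr => i _; by rewrite mulrC. Qed.

Section Rec.
End Rec.

Lemma reflD {R : rcfType} (a x y : 'rV[R]_4) : refl a (x + y) = refl a x + refl a y.
Proof. rewrite /refl dotDl mulrDr scalerDl. apply/rowP => j; rewrite !mxE; ring. Qed.
Lemma reflZ {R : rcfType} (a : 'rV[R]_4) k x : refl a (k *: x) = k *: refl a x.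
Proof. rewrite /refl dotZl. apply/rowP => j; rewrite !mxE; ring. Qed.
Lemma reflB {R : rcfType} (a x y : 'rV[R]_4) : refl a (x - y) = refl a x - refl a y.
Proof. rewrite -scaleN1r reflD reflZ. apply/rowP => j; rewrite !mxE; ring. Qed.

Lemma iter_rec {R : rcfType} (a b : 'rV[R]_4) :
  dot a a = 1 -> dot b b = 1 ->
  let c := dot a b in let t := 4 * c ^+ 2 - 2 in
  let f := fun x => refl a (refl b x) in
  forall n, iter n.+2 f a = t *: iter n.+1 f a - iter n f a.
Proof.
move=> haa hbb c t f.
have fa : f a = (4 * c ^+ 2 - 1) *: a - (2 * c) *: b.
  rewrite /f /refl dotBl dotZl [dot b a]dotC -/c haa.
  apply/rowP => j; rewrite !mxE; ring.
have fb : f b = (2 * c) *: a - b.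
  rewrite /f /refl dotBl dotZl hbb [dot b a]dotC -/c.
  apply/rowP => j; rewrite !mxE; ring.
have fB (x y : 'rV[R]_4) : f (x - y) = f x - f y by rewrite /f /= !reflB.
have fZ k (x : 'rV[R]_4) : f (k *: x) = k *: f x by rewrite /f /= !reflZ.
elim=> [|n IH].
  rewrite /= fa fB !fZ fa fb /t. apply/rowP => j; rewrite !mxE; ring.
rewrite [iter n.+3 f a]iterS {1}IH fB fZ. by [].
Qed.
Definition good (x : zt) := P x.1 || P x.2.

Lemma good_mul x y : good x -> good y -> good (mulZ x y).
Proof.
rewrite /good /= !PD !PM.
by case: (P x.1); case: (P x.2); case: (P y.1); case: (P y.2).
Qed.

Definition z16 : zt := (16, 0).
Lemma good_sub16 x y : good (subZ x (mulZ z16 y)) = good x.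
Proof. by rewrite /good /= !PB !PD !PM /P /= !addbF. Qed.

Fixpoint Wp (U : zt) (n : nat) : zt * zt :=
  match n with
  | 0 => ((2, 0), U)
  | n'.+1 => let p := Wp U n' in (p.2, subZ (mulZ U p.2) (mulZ z16 p.1))
  end.

Lemma Wgood U n : good U -> good (Wp U n).2.
Proof.
move=> hU; elim: n => [|n IH] //=.
by rewrite good_sub16; apply: good_mul.
Qed.

Lemma no2pow {R : rcfType} (z : zt) e : good z -> (0 < e)%N -> emb z <> (2 : R) ^+ e.
Proof.
case: z => a b; rewrite /good /emb /= => hg he h.
set m : int := 2 ^+ e - a.
have hm : (m%:~R : R) = b%:~R * tau R.
  by rewrite /m intrB rmorphXn /= -h; ring.
have h0 : ((m * m - b * m - b * b)%:~R : R) = 0.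
  rewrite !intrB !intrM hm.
  have h2 := @tau2 R.
  have -> : b%:~R * tau R * (b%:~R * tau R) - b%:~R * (b%:~R * tau R) - b%:~R * b%:~R
     = (b%:~R * b%:~R) * (tau R * tau R - tau R - 1) :> R by ring.
  by rewrite h2; ring.
move/eqP: h0; rewrite intr_eq0 => /eqP h0.
have : P (m * m - b * m - b * b) = false by rewrite h0 P0.
rewrite !PB !PM /m PB P2X //=.
by move: hg; case: (P a); case: (P b).
Qed.

Lemma seq_not1 {R : rcfType} (U : zt) (t : R) (d : nat -> R) :
  good U -> 4 * t = emb U -> d 0%N = 1 -> d 1%N = t / 2 ->
  (forall n, d n.+2 = t * d n.+1 - d n) ->
  forall n, (0 < n)%N -> d n <> 1.
Proof.
move=> hU ht d0 d1 drec.
have key : forall n, d n = emb (Wp U n).1 / 2 ^+ (2 * n + 1) /\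
                     d n.+1 = emb (Wp U n).2 / 2 ^+ (2 * n + 3).
  elim=> [|n [IH1 IH2]].
    rewrite d0 d1 /= -ht; split; last by field.
    by rewrite /emb /=; field.
  have e1 : (2 * n.+1 + 1 = 2 * n + 3)%N by lia.
  rewrite /= e1; split; first by rewrite IH2.
  rewrite drec IH1 IH2 /= embB !embM -ht.
  have -> : (2 * n.+1 + 3 = (2 * n + 1) + 4)%N by rewrite mulnS; lia.
  have -> : (2 * n + 3 = (2 * n + 1) + 2)%N by lia.
  rewrite !exprD.
  have hq : (2 : R) ^+ (2 * n + 1) != 0 by rewrite expf_neq0 // pnatr_eq0.
  rewrite /z16 /emb /=. field. by rewrite expf_neq0 // pnatr_eq0.
case=> // n _; have [k1 _] := key n.+1.
rewrite k1 => h.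
apply: (@no2pow R (Wp U n.+1).1 (2 * n.+1 + 1)) => //.
  exact: (Wgood n hU).
have hq : (2 : R) ^+ (2 * n.+1 + 1) != 0 by rewrite expf_neq0 // pnatr_eq0.
by rewrite -[LHS](divfK hq) h mul1r.
Qed.
Definition sv (s : 'S_4) (k : nat) : nat := s (inord k).
Definition Ipar (a b c d : nat) : bool :=
  odd ((b < a) + (c < a) + (d < a) + (c < b) + (d < b) + (d < c))%N.
Definition tpn (x y k : nat) : nat := if k == x then y else if k == y then x else k.
Definition vn (v0 v1 v2 v3 : nat) (j : nat) : nat := nth 0%N [:: v0; v1; v2; v3] j.

Lemma all_iota4 (p : nat -> bool) : all p (iota 0 4) -> forall k, (k < 4)%N -> p k.
Proof. by move/allP => h k hk; apply: h; rewrite mem_iota. Qed.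

Definition tp_check : bool :=
  all (fun v0 => all (fun v1 => all (fun v2 => all (fun v3 => all (fun x => all (fun y =>
    (uniq [:: v0; v1; v2; v3] && (x != y)) ==>
    (Ipar (vn v0 v1 v2 v3 (tpn x y 0)) (vn v0 v1 v2 v3 (tpn x y 1))
          (vn v0 v1 v2 v3 (tpn x y 2)) (vn v0 v1 v2 v3 (tpn x y 3)) == ~~ Ipar v0 v1 v2 v3))
  (iota 0 4)) (iota 0 4)) (iota 0 4)) (iota 0 4)) (iota 0 4)) (iota 0 4).

Lemma tp_check_ok : tp_check. Proof. by vm_compute. Qed.

Lemma tperm_inord (x y : 'I_4) k : (k < 4)%N -> (tperm x y (inord k) : nat) = tpn x y k.
Proof.
move=> hk; rewrite permE /= /tpn -!(inj_eq val_inj) /= inordK //.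
by case: eqP => // _; case: eqP => // _; rewrite inordK.
Qed.

Lemma sv_lt s k : (sv s k < 4)%N. Proof. exact: ltn_ord. Qed.

Lemma sv_uniq s : uniq [:: sv s 0; sv s 1; sv s 2; sv s 3].
Proof.
have -> : [:: sv s 0; sv s 1; sv s 2; sv s 3] = map (sv s) (iota 0 4) by [].
rewrite map_inj_in_uniq ?iota_uniq // => i j; rewrite !mem_iota /= => hi hj.
move/val_inj/perm_inj => /(congr1 val) /=. by rewrite !inordK.
Qed.

Lemma sv_vn s j : (j < 4)%N -> sv s j = vn (sv s 0) (sv s 1) (sv s 2) (sv s 3) j.
Proof. by case: j => [|[|[|[|j]]]]. Qed.

Lemma tpn_lt x y k : (x < 4)%N -> (y < 4)%N -> (k < 4)%N -> (tpn x y k < 4)%N.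
Proof. by rewrite /tpn => hx hy hk; case: ifP => _ //; case: ifP. Qed.

Lemma sv_tperm (x y : 'I_4) s k : (k < 4)%N ->
  sv (tperm x y * s) k = vn (sv s 0) (sv s 1) (sv s 2) (sv s 3) (tpn x y k).
Proof.
move=> hk; rewrite /sv permM -[tperm x y (inord k)]inord_val tperm_inord //.
by rewrite -/(sv s _) sv_vn // tpn_lt.
Qed.

Lemma Ipar_odd (s : 'S_4) : odd_perm s = Ipar (sv s 0) (sv s 1) (sv s 2) (sv s 3).
Proof.
have [ts -> dts] := prod_tpermP s.
elim: ts dts => [|[x y] ts IH] /=.
  move=> _; rewrite big_nil odd_perm1 /sv !perm1 !inordK //.
move=> /andP [/= hxy hts]; rewrite big_cons odd_mul_tperm hxy IH //.
rewrite !sv_tperm //.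
set P := (\prod_(j <- ts) tperm j.1 j.2)%g.
have := all_iota4 tp_check_ok (sv_lt P 0).
move/all_iota4 => /(_ _ (sv_lt P 1)).
move/all_iota4 => /(_ _ (sv_lt P 2)).
move/all_iota4 => /(_ _ (sv_lt P 3)).
move/all_iota4 => /(_ _ (ltn_ord x)).
move/all_iota4 => /(_ _ (ltn_ord y)).
rewrite sv_uniq hxy /= => /eqP ->. by case: (Ipar _ _ _ _).
Qed.
Definition z0 : zt := (0, 0).
Definition Al (e1 e2 e3 : bool) : seq zt := [:: z0; sZ e1 (1, 0); sZ e2 (1, -1); sZ e3 (0, 1)].
Definition Bl (e1 e2 e3 : bool) : seq zt := [:: z0; sZ e1 (1, 0); sZ e2 (0, 1); sZ e3 (1, -1)].

Lemma entry_perm {R : rcfType} (s : 'S_4) (a b c d : R) i :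
  permv s (vec4 a b c d) 0 i = [:: a; b; c; d]`_(s i).
Proof. by rewrite !mxE. Qed.

Lemma twice_nth {R : rcfType} (a b c d : R) (z : seq zt) j :
  size z = 4%N -> emb (nth z0 z 0) = 2 * a -> emb (nth z0 z 1) = 2 * b ->
  emb (nth z0 z 2) = 2 * c -> emb (nth z0 z 3) = 2 * d ->
  2 * [:: a; b; c; d]`_j = emb (nth z0 z j).
Proof.
move=> hz ha hb hc hd.
case: j => [|[|[|[|j]]]] //=; rewrite ?ha ?hb ?hc ?hd //.
by rewrite nth_nil nth_default ?hz // /emb /= mulr0 mul0r addr0.
Qed.

Lemma twiceA {R : rcfType} e1 e2 e3 j :
  2 * [:: 0; sgn R e1 / 2; sgn R e2 * tau' R / 2; sgn R e3 * tau R / 2]`_j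
  = emb (nth z0 (Al e1 e2 e3) j).
Proof.
apply: twice_nth => //=; rewrite ?embS ?emb0 ?emb1 ?embtau ?embtau' /=. all: by field.
Qed.

Lemma twiceB {R : rcfType} e1 e2 e3 j :
  2 * [:: 0; sgn R e1 / 2; sgn R e2 * tau R / 2; sgn R e3 * tau' R / 2]`_j
  = emb (nth z0 (Bl e1 e2 e3) j).
Proof.
apply: twice_nth => //=; rewrite ?embS ?emb0 ?emb1 ?embtau ?embtau' /=. all: by field.
Qed.
Lemma sum4 {R : rcfType} (F : 'I_4 -> R) :
  \sum_i F i = F (inord 0) + F (inord 1) + F (inord 2) + F (inord 3).
Proof.
rewrite (eq_bigr (fun i : 'I_4 => F (inord i))) => [|i _]; last by rewrite inord_val.
rewrite -(big_mkord xpredT (fun k => F (inord k))) unlock /=.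
by rewrite addr0 !addrA.
Qed.

Definition mk (s s' : 'S_4) (A B : seq zt) (k : nat) : zt :=
  mulZ (nth z0 A (sv s k)) (nth z0 B (sv s' k)).
Definition Xz (s s' : 'S_4) (A B : seq zt) : zt :=
  addZ (addZ (addZ (mk s s' A B 0) (mk s s' A B 1)) (mk s s' A B 2)) (mk s s' A B 3).

Lemma dot4 {R : rcfType} (s s' : 'S_4) (a b c d a' b' c' d' : R) (A B : seq zt) :
  (forall j, 2 * [:: a; b; c; d]`_j = emb (nth z0 A j)) ->
  (forall j, 2 * [:: a'; b'; c'; d']`_j = emb (nth z0 B j)) ->
  4 * dot (permv s (vec4 a b c d)) (permv s' (vec4 a' b' c' d')) = emb (Xz s s' A B).
Proof.
move=> hA hB.
have hA' j : [:: a; b; c; d]`_j = emb (nth z0 A j) / 2.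
  by rewrite -hA; field.
have hB' j : [:: a'; b'; c'; d']`_j = emb (nth z0 B j) / 2.
  by rewrite -hB; field.
rewrite dotE sum4 !entry_perm !hA' !hB' /Xz /mk !embD !embM /sv; by field.
Qed.

(* parity in F_4 *)
Definition pz (x : zt) : bool * bool := (P x.1, P x.2).
Definition add4 (p q : bool * bool) := (p.1 (+) q.1, p.2 (+) q.2).
Definition mul4 (p q : bool * bool) :=
  ((p.1 && q.1) (+) (p.2 && q.2), (p.1 && q.2) (+) (p.2 && q.1) (+) (p.2 && q.2)).
Definition nz4 (p : bool * bool) := p.1 || p.2.
Lemma pzD x y : pz (addZ x y) = add4 (pz x) (pz y).
Proof. by rewrite /pz /= !PD. Qed.
Lemma pzM x y : pz (mulZ x y) = mul4 (pz x) (pz y).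
Proof. by rewrite /pz /= !PD !PM. Qed.
Lemma goodE x : good x = nz4 (pz x). Proof. by []. Qed.

Definition pA (j : nat) : bool * bool :=
  nth (false, false) [:: (false, false); (true, false); (true, true); (false, true)] j.
Definition pB (j : nat) : bool * bool :=
  nth (false, false) [:: (false, false); (true, false); (false, true); (true, true)] j.

Lemma pzA e1 e2 e3 j : pz (nth z0 (Al e1 e2 e3) j) = pA j.
Proof.
by case: e1; case: e2; case: e3; case: j => [|[|[|[|j]]]]; rewrite /pz /P /pA /pB /z0 /= ?nth_nil.
Qed.
Lemma pzB e1 e2 e3 j : pz (nth z0 (Bl e1 e2 e3) j) = pB j.
Proof.
by case: e1; case: e2; case: e3; case: j => [|[|[|[|j]]]]; rewrite /pz /P /pA /pB /z0 /= ?nth_nil.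
Qed.

Definition main_check : bool :=
  all (fun a0 => all (fun a1 => all (fun a2 => all (fun a3 =>
  all (fun b0 => all (fun b1 => all (fun b2 => all (fun b3 =>
    (uniq [:: a0; a1; a2; a3] && uniq [:: b0; b1; b2; b3] &&
     ~~ Ipar a0 a1 a2 a3 && ~~ Ipar b0 b1 b2 b3) ==>
    nz4 (add4 (add4 (add4 (mul4 (pA a0) (pB b0)) (mul4 (pA a1) (pB b1)))
                    (mul4 (pA a2) (pB b2))) (mul4 (pA a3) (pB b3))))
  (iota 0 4)) (iota 0 4)) (iota 0 4)) (iota 0 4))
  (iota 0 4)) (iota 0 4)) (iota 0 4)) (iota 0 4).

Lemma main_check_ok : main_check. Proof. by vm_compute. Qed.

Lemma goodX (s s' : 'S_4) e1 e2 e3 f1 f2 f3 :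
  ~~ odd_perm s -> ~~ odd_perm s' -> good (Xz s s' (Al e1 e2 e3) (Bl f1 f2 f3)).
Proof.
rewrite !Ipar_odd => hs hs'.
rewrite goodE /Xz /mk !pzD !pzM !pzA !pzB.
have := all_iota4 main_check_ok (sv_lt s 0).
move/all_iota4 => /(_ _ (sv_lt s 1)).
move/all_iota4 => /(_ _ (sv_lt s 2)).
move/all_iota4 => /(_ _ (sv_lt s 3)).
move/all_iota4 => /(_ _ (sv_lt s' 0)).
move/all_iota4 => /(_ _ (sv_lt s' 1)).
move/all_iota4 => /(_ _ (sv_lt s' 2)).
move/all_iota4 => /(_ _ (sv_lt s' 3)).
by rewrite !sv_uniq hs hs'.
Qed.
Lemma dot_same {R : rcfType} (s : 'S_4) (a b c d : R) :
  dot (permv s (vec4 a b c d)) (permv s (vec4 a b c d)) = a * a + b * b + c * c + d * d.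
Proof.
rewrite dotE.
transitivity (\sum_(i < 4) ([:: a; b; c; d]`_i * [:: a; b; c; d]`_i)).
  rewrite [RHS](reindex_inj (@perm_inj _ s)); apply: eq_bigr => i _; by rewrite entry_perm.
by rewrite sum4 !inordK //= add0r.
Qed.

Lemma sgn2 {R : rcfType} e : sgn R e * sgn R e = 1.
Proof. by case: e; rewrite /sgn ?expr1 ?expr0 ?mulN1r ?opprK ?mulr1. Qed.

Lemma ttsum {R : rcfType} : tau' R * tau' R + tau R * tau R = 3.
Proof.
rewrite tau'E.
have -> : (1 - tau R) * (1 - tau R) + tau R * tau R = 1 - 2 * tau R + 2 * (tau R * tau R) by ring.
rewrite tau2; ring.
Qed.

Lemma normC {R : rcfType} (s : 'S_4) e1 e2 e3 (a b : R) :
  a * a + b * b = 3 ->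
  dot (permv s (vec4 0 (sgn R e1 / 2) (sgn R e2 * a / 2) (sgn R e3 * b / 2)))
      (permv s (vec4 0 (sgn R e1 / 2) (sgn R e2 * a / 2) (sgn R e3 * b / 2))) = 1.
Proof.
move=> hab; rewrite dot_same.
have -> : 0 * 0 + sgn R e1 / 2 * (sgn R e1 / 2) + sgn R e2 * a / 2 * (sgn R e2 * a / 2) +
    sgn R e3 * b / 2 * (sgn R e3 * b / 2)
  = (sgn R e1 * sgn R e1 + (sgn R e2 * sgn R e2) * (a * a) + (sgn R e3 * sgn R e3) * (b * b)) / 4
  by field.
rewrite !sgn2 !mul1r -addrA hab; by field.
Qed.

Lemma good_sub8 x : good (subZ x (8, 0)) = good x.
Proof. by rewrite /good /= !PB /P /= !addbF. Qed.

Lemma inC_of_dot {R : rcfType} (v : 'rV[R]_4) : Deltadot v -> DeltaC (tau' R) (tau R) v.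
Proof.
case=> hD hK; case: hD => [hA|[hB|hC]] //; case: hK; split; rewrite /Delta /Delta'; tauto.
Qed.

Lemma inC_of_dot' {R : rcfType} (v : 'rV[R]_4) : Deltadot' v -> DeltaC (tau R) (tau' R) v.
Proof.
case=> hD hK; case: hD => [hA|[hB|hC]] //; case: hK; split; rewrite /Delta /Delta'; tauto.
Qed.

Unset Implicit Arguments.
Theorem mainTheorem3 (R : rcfType) (alpha beta' : 'rV[R]_4) :
  Deltadot alpha -> Deltadot' beta' ->
  infinite_order (fun x => refl alpha (refl beta' x)).
Proof.
move=> /inC_of_dot [s [e1 [e2 [e3 [hs ha]]]]] /inC_of_dot' [s' [f1 [f2 [f3 [hs' hb]]]]].
have haa : dot alpha alpha = 1 by rewrite ha normC // ttsum.
have hbb : dot beta' beta' = 1 by rewrite hb normC // addrC ttsum.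
set c := dot alpha beta'.
set t : R := 4 * c ^+ 2 - 2.
set X := Xz s s' (Al e1 e2 e3) (Bl f1 f2 f3).
have hX : 4 * c = emb X by rewrite /c ha hb /X; apply: dot4 => j; [apply: twiceA | apply: twiceB].
have gX : good X by apply: goodX.
set U := subZ (mulZ X X) (8, 0).
have hU : 4 * t = emb U.
  rewrite /U embB embM -hX /t /emb /=; ring.
have gU : good U by rewrite /U good_sub8; apply: good_mul.
set f := fun x => refl alpha (refl beta' x).
set d := fun n => dot (iter n f alpha) alpha.
have d0 : d 0%N = 1 by [].
have d1 : d 1%N = t / 2.
  rewrite /d /= /f /refl !dotBl !dotZl haa [dot beta' alpha]dotC -/c /t; by field.
have drec : forall n, d n.+2 = t * d n.+1 - d n.
  move=> n; rewrite /d (iter_rec haa hbb n) dotBl dotZl //.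
move=> n hn; exists alpha => h.
apply: (seq_not1 gU hU d0 d1 drec hn).
by rewrite /d -/f h.
Qed.
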